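(* Let $K\ge 1$ be an integer, let $h_1,\dots,h_K>0$ and $\sigma^2>0$ be real numbers, and let $0<\epsilon<K$. For $g\in\mathbb{R}$ and $b\in\mathbb{R}^K$ let $\mathsf{MSE}(g,b)=\sum_{k=1}^{K}(g h_k b_k-1)^2+\sigma^2 g^2$ and $\mathsf{PW}(b)=\sum_{k=1}^K b_k^2$. Consider the problem of minimizing $\mathsf{PW}(b)$ over $g\in\mathbb{R}$, $b\in\mathbb{R}^K$ subject to $\mathsf{MSE}(g,b)\le\epsilon$. Put $c_k=1/h_k^2$. Then the equation $$M=\frac{\sum_{k=1}^{K}c_k\left(\frac{M}{c_k+M}\right)^2}{\epsilon-\sum_{k=1}^{K}\left(\frac{c_k}{c_k+M}\right)^2}$$ has a unique solution $M\in(0,\infty)$, and with $\tau_k=\dfrac{1}{1+M h_k^2}$ (so that $\sum_k\tau_k^2<\epsilon$), the problem has minimum value $$\mathsf{PW}^\star=\sigma^2\,\frac{\sum_{k=1}^{K}(1-\tau_k)^2/h_k^2}{\epsilon-\sum_{k=1}^{K}\tau_k^2},$$ attained at $$g^\star=\frac{1}{\sigma}\sqrt{\epsilon-\sum_{k=1}^{K}\tau_k^2},\qquad b_k^\star=\frac{\sigma M h_k}{(1+M h_k^2)\sqrt{\epsilon-\sum_{j=1}^{K}\tau_j^2}},\quad k=1,\dots,K.$$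
   Context: This models an over-the-air computation system with $K$ sensors: $h_k$ is the channel coefficient magnitude of sensor $k$, $b_k$ its transmit scaling factor, $g$ the receiver scaling factor, $\sigma^2$ the receiver noise variance and $\epsilon$ a limit on the computation mean-squared error. All variables are real, $h_k>0$, $\sigma=\sqrt{\sigma^2}>0$. *)

(* Defs.v *)
From mathcomp Require Import all_boot all_order all_algebra.
From mathcomp Require Import reals.
Set Implicit Arguments. Unset Strict Implicit. Unset Printing Implicit Defensive.
Import Order.TTheory GRing.Theory Num.Theory.
Local Open Scope ring_scope.

Section OTA.
Variables (R : realType) (K : nat).

Definition MSE (h : 'I_K -> R) (sigma2 : R) (g : R) (b : 'I_K -> R) : R :=
  \sum_(k < K) (g * h k * b k - 1) ^+ 2 + sigma2 * g ^+ 2.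

Definition PW (b : 'I_K -> R) : R := \sum_(k < K) b k ^+ 2.

Definition cc (h : 'I_K -> R) (k : 'I_K) : R := 1 / h k ^+ 2.

Definition Meq (h : 'I_K -> R) (eps M : R) : Prop :=
  M = (\sum_(k < K) cc h k * (M / (cc h k + M)) ^+ 2)
      / (eps - \sum_(k < K) (cc h k / (cc h k + M)) ^+ 2).

Definition tau (h : 'I_K -> R) (M : R) (k : 'I_K) : R := 1 / (1 + M * h k ^+ 2).

Definition PWstar (h : 'I_K -> R) (sigma2 eps M : R) : R :=
  sigma2 * (\sum_(k < K) (1 - tau h M k) ^+ 2 / h k ^+ 2)
         / (eps - \sum_(k < K) tau h M k ^+ 2).

Definition gstar (h : 'I_K -> R) (sigma2 eps M : R) : R :=
  1 / Num.sqrt sigma2 * Num.sqrt (eps - \sum_(k < K) tau h M k ^+ 2).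

Definition bstar (h : 'I_K -> R) (sigma2 eps M : R) (k : 'I_K) : R :=
  Num.sqrt sigma2 * M * h k /
    ((1 + M * h k ^+ 2) * Num.sqrt (eps - \sum_(j < K) tau h M j ^+ 2)).

End OTA.

(* Main.v *)
Require Import Defs.
From mathcomp Require Import all_boot all_order all_algebra.
From mathcomp Require Import reals.
From mathcomp Require Import all_classical all_reals all_analysis.
From mathcomp.algebra_tactics Require Import ring lra.
Import Order.TTheory GRing.Theory Num.Theory.
Import numFieldNormedType.Exports.
Local Open Scope ring_scope.

Lemma sum_cont (R : realType) (I : eqType) (f : I -> R -> R) (x : R) (s : seq I) :
  (forall i, {for x, continuous (f i)}) ->
  {for x, continuous (fun M => \sum_(i <- s) f i M)}.
Proof.
move=> H; elim: s => [|i s IH].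
  have -> : (fun M => \sum_(i <- [::]) f i M) = (fun=> 0) by apply/funext => M; rewrite big_nil.
  exact: cst_continuous.
have -> : (fun M => \sum_(j <- i :: s) f j M) = (f i + (fun M => \sum_(j <- s) f j M))
  by apply/funext => M; rewrite big_cons.
exact: (continuousD (H i) IH).
Qed.

Lemma term_cont (R : realType) (c x : R) : 0 <= c -> 0 <= x ->
  {for x, continuous (fun M : R => 1 / (1 + M * c))}.
Proof.
move=> hc hx.
have -> : (fun M : R => 1 / (1 + M * c)) = (fun M => ((cst 1 + (id \* cst c)) M)^-1)
  by apply/funext => M; rewrite div1r.
apply: continuousV.
  by rewrite /= gt_eqF // ltr_pwDl // mulr_ge0.
apply: continuousD; first exact: cst_continuous.
apply: continuousM; first exact: cvg_id. exact: cst_continuous.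
Qed.

Lemma ltr_sumK (R : realType) K (F G : 'I_K -> R) : (0 < K)%N ->
  (forall i, F i < G i) -> \sum_(i < K) F i < \sum_(i < K) G i.
Proof.
move=> hK H; apply: ltr_sum => //; apply/hasP; exists (Ordinal hK) => //.
Qed.

Section Main.
Variables (R : realType) (K : nat) (h : 'I_K -> R).
Hypothesis hpos : forall k, 0 < h k.

Lemma den_pos M k : 0 <= M -> 0 < 1 + M * h k ^+ 2.
Proof. by move=> hM; rewrite ltr_pwDl // mulr_ge0 // exprn_ge0 // ltW. Qed.

Lemma tau_gt0 M k : 0 <= M -> 0 < tau h M k.
Proof. by move=> hM; rewrite /tau divr_gt0 // den_pos. Qed.

Lemma tau_lt1 M k : 0 < M -> tau h M k < 1.
Proof.
move=> hM; rewrite /tau ltr_pdivrMr ?den_pos ?ltW // mul1r.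
by rewrite ltrDl mulr_gt0 // exprn_gt0.
Qed.

Lemma tau0 k : tau h 0 k = 1.
Proof. by rewrite /tau mul0r addr0 divr1. Qed.

Lemma tau_decr M1 M2 k : 0 <= M1 -> M1 < M2 -> tau h M2 k < tau h M1 k.
Proof.
move=> h1 h12; have h2 : 0 <= M2 by apply: le_trans (ltW h12).
rewrite /tau !div1r ltf_pV2 ?posrE ?den_pos //.
by rewrite ltrD2l ltr_pM2r // exprn_gt0.
Qed.

Lemma cc_tau M k : 0 <= M -> cc h k / (cc h k + M) = tau h M k.
Proof.
move=> hM; have := den_pos M k hM; have := hpos k; rewrite /cc /tau => hk hd.
have hk0 : h k != 0 by rewrite gt_eqF.
have hd0 : 1 + M * h k ^+ 2 != 0 by rewrite gt_eqF.
have hc : 1 / h k ^+ 2 + M != 0.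
  rewrite gt_eqF // ltr_pwDl // divr_gt0 // exprn_gt0 //.
by field; rewrite ?hk0 ?hd0 ?hc.
Qed.

Lemma cc_num M k : 0 <= M ->
  cc h k * (M / (cc h k + M)) ^+ 2 = M * (tau h M k - tau h M k ^+ 2).
Proof.
move=> hM; have := den_pos M k hM; have := hpos k; rewrite /cc /tau => hk hd.
have hk0 : h k != 0 by rewrite gt_eqF.
have hd0 : 1 + M * h k ^+ 2 != 0 by rewrite gt_eqF.
have hc : 1 / h k ^+ 2 + M != 0.
  rewrite gt_eqF // ltr_pwDl // divr_gt0 // exprn_gt0 //.
by field; rewrite ?hk0 ?hd0 ?hc.
Qed.

Lemma sum_sq_lt M : (0 < K)%N -> 0 < M ->
  \sum_(k < K) tau h M k ^+ 2 < \sum_(k < K) tau h M k.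
Proof.
move=> hK hM; apply: ltr_sumK => // k.
have h0 := tau_gt0 M k (ltW hM); have h1 := tau_lt1 M k hM.
by rewrite expr2 gtr_pMr.
Qed.

Lemma Meq_iff eps M : (0 < K)%N -> 0 < M ->
  Meq h eps M <-> \sum_(k < K) tau h M k = eps.
Proof.
move=> hK hM; have hAB := sum_sq_lt M hK hM; rewrite /Meq.
under eq_bigr do rewrite cc_num ?ltW //.
under [X in _ / (_ - X)]eq_bigr do rewrite cc_tau ?ltW //.
rewrite -mulr_sumr sumrB.
set A := \sum_(i < K) tau h M i; set B := \sum_(i < K) tau h M i ^+ 2.
have hM0 : M != 0 by rewrite gt_eqF.
have [hD|hD] := eqVneq (eps - B) 0.
  rewrite hD invr0 mulr0; split => [E|E]; first by move: hM0; rewrite E eqxx.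
  by move: hAB hD; rewrite -/A -/B -E; lra.
split => E.
  have : M * (eps - B) = M * (A - B) by rewrite {1}E mulfVK.
  move/(mulfI hM0) => /eqP; rewrite eq_sym -subr_eq0 opprB addrA subrK subr_eq0.
  by move/eqP.
by rewrite E mulfK.
Qed.


Lemma F_cont x : 0 <= x -> {for x, continuous (fun M => \sum_(k < K) tau h M k)}.
Proof.
move=> hx; rewrite /tau; apply: sum_cont => k.
by apply: term_cont => //; rewrite exprn_ge0 // ltW.
Qed.

Lemma F0 : \sum_(k < K) tau h 0 k = K%:R.
Proof. by under eq_bigr do rewrite tau0; rewrite sumr_const card_ord. Qed.

Lemma exists_M eps : (0 < K)%N -> 0 < eps -> eps < K%:R ->
  exists M, 0 < M /\ \sum_(k < K) tau h M k = eps.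
Proof.
move=> hK he heK.
set S := \sum_(k < K) cc h k.
have hKr : 0 < (K%:R : R) by rewrite ltr0n.
have ccS k : cc h k <= S.
  rewrite /S (bigD1 k) //= lerDl sumr_ge0 // => i _.
  by rewrite /cc divr_ge0 // exprn_ge0 // ltW.
set M0 := K%:R / eps * S.
have hM0 : 0 <= M0.
  have hS : 0 <= S.
    apply: le_trans (ccS (Ordinal hK)).
    by rewrite /cc divr_ge0 // exprn_ge0 // ltW.
  by rewrite /M0 mulr_ge0 // divr_ge0 // ltW.
have FM0 : \sum_(k < K) tau h M0 k <= eps.
  have -> : eps = \sum_(k < K) (eps / K%:R).
    by rewrite sumr_const card_ord -[RHS]mulr_natr mulfVK // gt_eqF.
  apply: ler_sum => k _.
  have hd := den_pos M0 k hM0.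
  rewrite /tau div1r -[eps / _]invf_div ler_pV2 ?inE ?unitfE ?gt_eqF ?hd ?divr_gt0 //.
  apply: (le_trans _ (ler_wpDl ler01 (lexx _))).
  have -> : M0 * h k ^+ 2 = K%:R / eps * (S * h k ^+ 2) by rewrite /M0 !mulrA.
  have hKe : 0 <= K%:R / eps by rewrite divr_ge0 // ltW.
  rewrite ler_peMr //.
  have hk := hpos k; have := ccS k; rewrite /cc.
  by rewrite ler_pdivrMr ?exprn_gt0.
have [c hc Fc] : exists2 c, c \in `[0, M0] & (fun M => \sum_(k < K) tau h M k) c = eps.
  apply: IVT => //.
    apply: continuous_in_subspaceT => x; rewrite inE /= in_itv /= => /andP[hx _].
    exact: F_cont.
  rewrite F0 ge_min le_max FM0 /= (ltW heK) orbT //.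
exists c; split => //.
move: hc; rewrite in_itv /= => /andP[hc0 _].
rewrite lt_neqAle hc0 andbT; apply/negP => /eqP c0.
by move: Fc; rewrite -c0 /= F0 => E; move: heK; rewrite E ltxx.
Qed.

Lemma M_unique M1 M2 : (0 < K)%N -> 0 < M1 -> 0 < M2 ->
  \sum_(k < K) tau h M1 k = \sum_(k < K) tau h M2 k -> M1 = M2.
Proof.
move=> hK h1 h2 E; case: (ltgtP M1 M2) => // H.
  have : \sum_(k < K) tau h M2 k < \sum_(k < K) tau h M1 k.
    by apply: ltr_sumK => // k; apply: tau_decr => //; rewrite ltW.
  by rewrite E ltxx.
have : \sum_(k < K) tau h M1 k < \sum_(k < K) tau h M2 k.
  by apply: ltr_sumK => // k; apply: tau_decr => //; rewrite ltW.
by rewrite E ltxx.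
Qed.

End Main.

Section Opt.
Variables (R : realType) (K : nat) (h : 'I_K -> R) (sigma2 eps M : R).
Hypothesis hpos : forall k, 0 < h k.
Hypothesis hs : 0 < sigma2.
Hypothesis hM : 0 < M.
Hypothesis hF : \sum_(k < K) tau h M k = eps.
Hypothesis hD : \sum_(k < K) tau h M k ^+ 2 < eps.

Let D := eps - \sum_(k < K) tau h M k ^+ 2.
Let hD0 : 0 < D. Proof. by rewrite /D subr_gt0. Qed.

Lemma MSE_star : MSE h sigma2 (gstar h sigma2 eps M) (bstar h sigma2 eps M) = eps.
Proof.
rewrite /MSE /gstar /bstar -/D.
have hsD : 0 < Num.sqrt D by rewrite sqrtr_gt0.
have hss : 0 < Num.sqrt sigma2 by rewrite sqrtr_gt0.
have E : forall k, 1 / Num.sqrt sigma2 * Num.sqrt D * h k *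
   (Num.sqrt sigma2 * M * h k / ((1 + M * h k ^+ 2) * Num.sqrt D)) - 1 = - tau h M k.
  move=> k; have hd := @den_pos R K h hpos M k (ltW hM); rewrite /tau.
  by field; rewrite ?gt_eqF.
under eq_bigr do rewrite E sqrrN.
rewrite exprMn expr_div_n expr1n sqr_sqrtr ?ltW // sqr_sqrtr ?ltW //.
rewrite mulrA mulrCA mulfV ?gt_eqF // mul1r /D; ring.
Qed.

Lemma PW_star : PW (bstar h sigma2 eps M) = PWstar h sigma2 eps M.
Proof.
rewrite /PW /PWstar /bstar -/D mulr_sumr mulr_suml; apply: eq_bigr => k _.
have hd := @den_pos R K h hpos M k (ltW hM); have hk := hpos k.
rewrite expr_div_n !exprMn !sqr_sqrtr ?ltW // /tau.
by field; rewrite ?gt_eqF.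
Qed.

Lemma PWstar_val : PWstar h sigma2 eps M = sigma2 * M.
Proof.
rewrite /PWstar -/D.
have -> : \sum_(k < K) (1 - tau h M k) ^+ 2 / h k ^+ 2 = M * D.
  rewrite /D -hF -sumrB mulr_sumr; apply: eq_bigr => k _.
  have hd := @den_pos R K h hpos M k (ltW hM); have hk := hpos k; rewrite /tau.
  by field; rewrite ?gt_eqF.
by rewrite mulrA mulfK // gt_eqF.
Qed.

Lemma lower_bound g b : (0 < K)%N -> eps < K%:R ->
  MSE h sigma2 g b <= eps -> sigma2 * M <= PW b.
Proof.
move=> hK heK hmse.
have key : forall k, M * tau h M k <= g ^+ 2 * b k ^+ 2 + M * (g * h k * b k - 1) ^+ 2.
  move=> k; have hd := @den_pos R K h hpos M k (ltW hM); rewrite -subr_ge0.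
  have -> : g ^+ 2 * b k ^+ 2 + M * (g * h k * b k - 1) ^+ 2 - M * tau h M k
     = ((1 + M * h k ^+ 2) * (g * b k) - M * h k) ^+ 2 / (1 + M * h k ^+ 2).
    by rewrite /tau; field; rewrite gt_eqF.
  by rewrite divr_ge0 ?sqr_ge0 // ltW.
have S1 : \sum_(k < K) M * tau h M k <=
    \sum_(k < K) (g ^+ 2 * b k ^+ 2 + M * (g * h k * b k - 1) ^+ 2).
  by apply: ler_sum => k _; exact: key.
rewrite -mulr_sumr hF big_split /= -mulr_sumr -mulr_sumr in S1.
move: hmse; rewrite /MSE /PW => hmse.
set S2 := \sum_(k < K) (g * h k * b k - 1) ^+ 2 in S1 hmse.
set P := \sum_(k < K) b k ^+ 2 in S1 *.
have g0 : g != 0.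
  apply/negP => /eqP g0; move: hmse; rewrite /S2 g0.
  under eq_bigr do rewrite !mul0r sub0r sqrrN expr1n.
  by rewrite sumr_const card_ord expr0n /= mulr0 addr0 leNgt heK.
have hg : 0 < g ^+ 2 by rewrite exprn_even_gt0 // g0.
have H2 := ler_wpM2l (ltW hM) hmse.
have : g ^+ 2 * (sigma2 * M) <= g ^+ 2 * P by nra.
by rewrite ler_pM2l.
Qed.

End Opt.

Theorem theorem2 (R : realType) (K : nat) (h : 'I_K -> R) (sigma2 eps : R) :
  (1 <= K)%N ->
  (forall k, 0 < h k) ->
  0 < sigma2 ->
  0 < eps -> eps < K%:R ->
  exists M : R,
    [/\ 0 < M, Meq h eps M,
        (forall M' : R, 0 < M' -> Meq h eps M' -> M' = M),
        \sum_(k < K) tau h M k ^+ 2 < eps &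
        [/\ MSE h sigma2 (gstar h sigma2 eps M) (bstar h sigma2 eps M) <= eps,
            PW (bstar h sigma2 eps M) = PWstar h sigma2 eps M &
            (forall (g : R) (b : 'I_K -> R),
               MSE h sigma2 g b <= eps -> PWstar h sigma2 eps M <= PW b)]].
Proof.
move=> hK hpos hs he heK.
have [M [hM hF]] := @exists_M R K h hpos eps hK he heK.
have hD : \sum_(k < K) tau h M k ^+ 2 < eps by rewrite -hF; exact: (@sum_sq_lt R K h hpos M hK hM).
exists M; split => //.
- by apply/(@Meq_iff R K h hpos eps M hK hM).
- move=> M' hM' /(@Meq_iff R K h hpos eps M' hK hM') hF'.
  by apply: (@M_unique R K h hpos M' M hK hM' hM); rewrite hF' hF.
split.
- by rewrite MSE_star.
- exact: PW_star.
- by move=> g b hmse; rewrite PWstar_val //; exact: lower_bound hmse.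
Qed.
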